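(* Let $X$ be a Banach space and $A:D(A)\to X$ the infinitesimal generator of a $C_0$-semigroup $T(\cdot)$ on $X$; consider $\dot x=Ax$ with (mild) solutions $\phi(t,x)=T(t)x$, regarded as a system without disturbances. The following are equivalent: (i) $T$ is exponentially stable; (ii) $\{0\}$ is UGAS; (iii) $\{0\}$ is uniformly globally attractive; (iv) $\{0\}$ is uniformly globally weakly attractive; (v) there is a non-coercive Lyapunov function for $\dot x=Ax$ (with respect to $\{0\}$).
   Context: $\mathbb R_+=[0,\infty)$. $T$ is exponentially stable if there are $M,\lambda>0$ with $\|T(t)\|\le Me^{-\lambda t}$ for all $t\ge0$. $\mathcal K$: continuous strictly increasing $\gamma:\mathbb R_+\to\mathbb R_+$ with $\gamma(0)=0$; $\mathcal K_\infty$: unbounded elements of $\mathcal K$; $\mathcal{KL}$: continuous $\beta:\mathbb R_+^2\to\mathbb R_+$ with $\beta(\cdot,t)\in\mathcal K$ for each $t$ and $\beta(r,\cdot)$ strictly decreasing to $0$ for each $r>0$. $\{0\}$ is UGAS if there is $\beta\in\mathcal{KL}$ with $\|T(t)x\|\le\beta(\|x\|,t)$ for all $x\in X,t\ge0$. $\{0\}$ is uniformly globally attractive if for all $r,\varepsilon>0$ there is $\tau$ with $\|T(t)x\|\le\varepsilon$ whenever $\|x\|\le r$, $t\ge\tau$. $\{0\}$ is uniformly globally weakly attractive if for all $\varepsilon,r>0$ there is $\tau$ such that for every $x$ with $\|x\|\le r$ there is $t\le\tau$ with $\|T(t)x\|\le\varepsilon$. A non-coercive Lyapunov function is a continuous $V:X\to\mathbb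 R_+$ with $V(0)=0$, for which there are $\psi_2\in\mathcal K_\infty$, $\alpha\in\mathcal K$ with $0<V(x)\le\psi_2(\|x\|)$ and $\liminf_{t\to0^+}\frac1t(V(T(t)x)-V(x))\le-\alpha(\|x\|)$ for all $x\ne0$. *)

(* Defs.v *)
From HB Require Import structures.
From mathcomp Require Import all_boot all_order all_algebra.
From mathcomp Require Import all_classical all_reals all_analysis.
Set Implicit Arguments. Unset Strict Implicit. Unset Printing Implicit Defensive.
Import Order.TTheory GRing.Theory Num.Theory.
Import numFieldNormedType.Exports.
Local Open Scope classical_set_scope.
Local Open Scope ring_scope.

(* A C_0-semigroup (T(t))_{t >= 0} of bounded linear operators on X.
   Only the values T t for t >= 0 are relevant. *)
Definition C0_semigroup (R : realType) (X : completeNormedModType R)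
  (T : R -> X -> X) : Prop :=
  [/\ (forall t, 0 <= t -> linear (T t) /\ continuous (T t)),
      (forall x, T 0 x = x),
      (forall t s x, 0 <= t -> 0 <= s -> T (t + s) x = T t (T s x)) &
      (forall x, T t x @[t --> 0^'+] --> x)].

Definition class_K (R : realType) (g : R -> R) : Prop :=
  [/\ {within `[0, +oo[, continuous g}, g 0 = 0,
      (forall r, 0 <= r -> 0 <= g r) &
      (forall r s, 0 <= r -> r < s -> g r < g s)].

Definition class_Kinf (R : realType) (g : R -> R) : Prop :=
  class_K g /\ (forall M, exists r, 0 <= r /\ M < g r).

Definition class_KL (R : realType) (b : R -> R -> R) : Prop :=
  [/\ {within `[0, +oo[ `*` `[0, +oo[, continuous (fun p : R * R => b p.1 p.2)},
      (forall p q, 0 <= p -> 0 <= q -> 0 <= b p q),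
      (forall t, 0 <= t -> class_K (fun r => b r t)) &
      (forall r, 0 < r ->
         (forall t s, 0 <= t -> t < s -> b r s < b r t) /\ b r t @[t --> +oo] --> 0)].

(* (i) exponential stability:  ||T(t)|| <= M e^{-lambda t}, the operator norm
   bound written out as a bound on ||T(t) x|| / ||x||. *)
Definition exp_stable (R : realType) (X : completeNormedModType R)
  (T : R -> X -> X) : Prop :=
  exists M lam : R, 0 < M /\ 0 < lam /\
    forall t x, 0 <= t -> `|T t x| <= M * expR (- lam * t) * `|x|.

Definition UGAS (R : realType) (X : completeNormedModType R)
  (T : R -> X -> X) : Prop :=
  exists beta, class_KL beta /\
    forall x t, 0 <= t -> `|T t x| <= beta `|x| t.

Definition UGATT (R : realType) (X : completeNormedModType R)
  (T : R -> X -> X) : Prop :=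
  forall r eps : R, 0 < r -> 0 < eps -> exists tau : R, 0 <= tau /\
    forall x t, `|x| <= r -> tau <= t -> `|T t x| <= eps.

Definition UGWATT (R : realType) (X : completeNormedModType R)
  (T : R -> X -> X) : Prop :=
  forall eps r : R, 0 < eps -> 0 < r -> exists tau : R, 0 <= tau /\
    forall x, `|x| <= r -> exists t, 0 <= t /\ t <= tau /\ `|T t x| <= eps.

(* (v) non-coercive Lyapunov function: the Dini-type lower derivative
   liminf_{t -> 0+} (V(T t x) - V x)/t, taken in the extended reals. *)
Definition noncoercive_Lyapunov (R : realType) (X : completeNormedModType R)
  (T : R -> X -> X) (V : X -> R) : Prop :=
  [/\ continuous V, V 0 = 0, (forall x, 0 <= V x) &
   exists psi2 alpha, class_Kinf psi2 /\ class_K alpha /\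
     forall x, x != 0 ->
       [/\ 0 < V x, V x <= psi2 `|x| &
           (limf_einf (fun t : R => ((V (T t x) - V x) / t)%:E) 0^'+
              <= (- alpha `|x|)%:E)%E]].

(* Main.v *)
Require Import Defs.
From HB Require Import structures.
From mathcomp Require Import all_boot all_order all_algebra.
From mathcomp Require Import all_classical all_reals all_analysis.
From mathcomp Require Import ring lra.
Import Order.TTheory GRing.Theory Num.Theory.
Import numFieldNormedType.Exports.
Local Open Scope ring_scope.
Local Open Scope classical_set_scope.
Set Implicit Arguments. Unset Strict Implicit. Unset Printing Implicit Defensive.

Section S.
Variables (R : realType) (X : completeNormedModType R) (T : R -> X -> X).
Hypothesis HT : C0_semigroup T.

Lemma Tlin t : 0 <= t -> linear (T t).
Proof. by case: HT => H _ _ _ /H []. Qed.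

Lemma Tcont t : 0 <= t -> continuous (T t).
Proof. by case: HT => H _ _ _ /H []. Qed.

Lemma T_0 x : T 0 x = x.
Proof. by case: HT. Qed.

Lemma T_add t s x : 0 <= t -> 0 <= s -> T (t + s) x = T t (T s x).
Proof. by case: HT => _ _ H _; apply: H. Qed.

Lemma T_strong x : T t x @[t --> 0^'+] --> x.
Proof. by case: HT. Qed.

Lemma opbound t : 0 <= t -> exists c : R, 0 < c /\ forall x, `|T t x| <= c * `|x|.
Proof.
move=> t0.
pose packl : {linear X -> X} :=
  HB.pack (T t) (GRing.isLinear.Build _ _ _ _ _ (Tlin t0)).
have : bounded_near packl (nbhs 0).
  by apply/linear_bounded_continuous; exact: (Tcont t0).
move/(linear_boundedP packl) => [M [_ HM]].
exists (Num.max M 0 + 1); split; first by rewrite ltr_pwDr // le_max lexx orbT.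
move=> x; apply: (HM (Num.max M 0 + 1)).
by rewrite ltr_pwDr // le_max lexx.
Qed.
Lemma T_x0 t : 0 <= t -> T t 0 = 0.
Proof.
move=> t0; have := Tlin t0 1 0 0; rewrite !scale1r addr0 => h.
by apply: (addrI (T t 0)); rewrite addr0 -h.
Qed.

Lemma T_Z t a x : 0 <= t -> T t (a *: x) = a *: T t x.
Proof.
move=> t0; have := Tlin t0 a x 0; rewrite !addr0 T_x0 // addr0 //.
Qed.

Lemma T_D t x y : 0 <= t -> T t (x + y) = T t x + T t y.
Proof. by move=> t0; have := Tlin t0 1 x y; rewrite !scale1r. Qed.

Lemma T_B t x y : 0 <= t -> T t (x - y) = T t x - T t y.
Proof.
move=> t0; rewrite T_D // -scaleN1r T_Z // scaleN1r //.
Qed.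


Lemma near_right (P : R -> Prop) : (\forall t \near 0^'+, P t) ->
  exists2 d, 0 < d & forall t, 0 < t -> t < d -> P t.
Proof.
move=> /nbhs_ballP [e e0 H]; exists e => // t t0 te; apply: H => //.
by rewrite /ball /= sub0r normrN gtr0_norm.
Qed.
Lemma orbit_small x : exists2 d, 0 < d &
  forall t, 0 <= t -> t < d -> `|T t x| <= `|x| + 1.
Proof.
have /cvgr_dist_lt/(_ 1 ltr01)/near_right [d d0 H] := @T_strong x.
exists d => // t; rewrite le_eqVlt => /orP [/eqP <-|t0 td].
  by rewrite T_0 lerDl.
have := H t t0 td; rewrite -(normrN (x - _)) opprB => h.
have := ler_normD (T t x - x) x; rewrite subrK => /le_trans; apply.
by rewrite addrC lerD2l ltW.
Qed.

Lemma scale_bound t r M : 0 <= t -> 0 < r ->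
  (forall y, `|y| <= r -> `|T t y| <= M) -> forall x, `|T t x| <= M / r * `|x|.
Proof.
move=> t0 r0 H x; have [->|x0] := eqVneq x 0.
  by rewrite T_x0 // !normr0 mulr0.
have nx : 0 < `|x| by rewrite normr_gt0.
have := H ((r / `|x|) *: x); rewrite T_Z // !normrZ gtr0_norm ?divr_gt0 //.
rewrite normfV normr_id divfK ?gt_eqF // => /(_ (lexx _)) h.
move: h nx; set u := `|T t x|; set v := `|x| => h nx.
have e : u = (r / v * u) * (v / r) by field; rewrite !gt_eqF.
rewrite e; have : v / r * M = M / r * v by ring.
move=> <-; rewrite mulrC; by apply: ler_wpM2l => //; rewrite divr_ge0 // ltW.
Qed.

Lemma finmax (f : nat -> R) N : exists M, forall n, (n <= N)%N -> f n <= M.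
Proof.
elim: N => [|N [M HM]]; first by exists (f 0%N) => n; rewrite leqn0 => /eqP ->.
exists (Num.max M (f N.+1)) => n; rewrite leq_eqVlt => /orP [/eqP ->|].
  by rewrite le_max lexx orbT.
by rewrite ltnS => /HM h; rewrite le_max h.
Qed.

Lemma locbound0 : exists d K, 0 < d /\ 0 < K /\
  forall s x, 0 <= s -> s <= d -> `|T s x| <= K * `|x|.
Proof.
apply: contrapT => H.
have Hn : forall n : nat, exists p : R * X, [/\ 0 <= p.1, p.1 <= n.+1%:R^-1 &
    n.+1%:R * `|p.2| < `|T p.1 p.2|].
  move=> n; apply: contrapT => Hn; apply: H.
  exists n.+1%:R^-1, n.+1%:R; split; first by rewrite invr_gt0 ltr0n.
  split; first by rewrite ltr0n.
  move=> s x s0 sd; rewrite leNgt; apply/negP => hlt; apply: Hn; exists (s, x).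
  by split.
have [f Hf] := choice Hn.
pose F : set (X -> X) := [set S | exists n, S = T (f n).1].
have HF : forall S, F S -> bounded_fun_norm S /\ linear S.
  move=> S [n ->]; have [s0 _ _] := Hf n; split; last exact: Tlin.
  move=> r; have [c [c0 Hc]] := opbound s0; exists (c * r) => x xr.
  by apply: (le_trans (Hc x)); rewrite ler_wpM2l // ltW.
have PB : pointwise_bounded F.
  move=> x; have [d d0 Hd] := orbit_small x.
  have [M1 HM1] := finmax (fun n => `|T (f n).1 x|) (Num.truncn d^-1).
  exists (Num.max M1 (`|x| + 1)) => S [n ->].
  case: (leqP n (Num.truncn d^-1)) => hn.
    by rewrite le_max HM1.
  have [s0 s1 _] := Hf n.
  rewrite le_max Hd ?orbT //.
  apply: (le_lt_trans s1); rewrite -[d]invrK ltf_pV2 ?posrE ?invr_gt0 ?ltr0n //.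
  apply: (lt_le_trans (truncnS_gt _)); rewrite ler_nat; exact: leqW hn.
have [M HM] := Banach_Steinhauss HF PB 1.
pose n := Num.truncn M.
have [s0 _ hlt] := Hf n.
have hb := scale_bound s0 ltr01 (fun y hy => HM _ (ex_intro _ n erefl) y hy) ((f n).2).
rewrite divr1 in hb.
have := lt_le_trans hlt hb.
apply/negP; rewrite -leNgt; apply: ler_wpM2r => //; exact: ltW (truncnS_gt M).
Qed.

Lemma locbound tau : exists K, 0 < K /\
  forall s x, 0 <= s -> s <= tau -> `|T s x| <= K * `|x|.
Proof.
have [d [K [d0 [K0 HK]]]] := locbound0.
pose K1 := Num.max K 1.
have K11 : 1 <= K1 by rewrite le_max lexx orbT.
have HK1 : forall s x, 0 <= s -> s <= d -> `|T s x| <= K1 * `|x|.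
  move=> s x s0 sd; apply: (le_trans (HK s x s0 sd)).
  by apply: ler_wpM2r => //; rewrite le_max lexx.
have step : forall n : nat, forall s x, 0 <= s -> s <= n%:R * d ->
    `|T s x| <= K1 ^+ n.+1 * `|x|.
  elim => [|n IH] s x s0 sn.
    by rewrite expr1; apply: HK1 => //; apply: (le_trans sn); rewrite mul0r ltW.
  case: (lerP s d) => hs.
    apply: (le_trans (HK1 s x s0 hs)); apply: ler_wpM2r => //.
    by apply: ler_eXnr.
  have -> : s = d + (s - d) by rewrite addrC subrK.
  rewrite T_add; [|exact: ltW|by rewrite subr_ge0 ltW].
  apply: (le_trans (HK1 _ _ (ltW d0) (lexx _))).
  rewrite exprS -mulrA ler_wpM2l ?(le_trans ler01) //.
  apply: IH; first by rewrite subr_ge0 ltW.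
  by rewrite lerBlDl; move: sn; rewrite -natr1 mulrDl mul1r addrC.
exists (K1 ^+ (Num.truncn (tau / d)).+2); split.
  by apply: (lt_le_trans ltr01); apply: exprn_ege1.
move=> s x s0 st; apply: step => //; apply: (le_trans st).
rewrite -ler_pdivrMr //; apply: ltW; exact: truncnS_gt.
Qed.

Lemma halve tau : (forall x, `|x| <= 1 -> exists t, 0 <= t /\ t <= tau /\ `|T t x| <= 2^-1) ->
  forall y, exists t, 0 <= t /\ t <= tau /\ `|T t y| <= 2^-1 * `|y|.
Proof.
move=> H y; have [->|y0] := eqVneq y 0.
  have h0 : `|0 : X| <= 1 by rewrite normr0.
  have [t [t0 [tt _]]] := H 0 h0.
  by exists t; rewrite T_x0 // normr0 mulr0.
have ny : 0 < `|y| by rewrite normr_gt0.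
pose z := `|y|^-1 *: y.
have hy : `|z| <= 1.
  by rewrite /z normrZ normfV normr_id mulVf ?gt_eqF.
have [t [t0 [tt h]]] := H _ hy.
exists t; split => //; split => //.
move: h; rewrite /z T_Z // normrZ normfV normr_id -ler_pdivlMl ?invr_gt0 //.
by rewrite invrK mulrC.
Qed.

Lemma pow2_exp (k : nat) tau t : 0 < tau -> t <= k%:R * tau ->
  (2 ^+ k)^-1 <= expR (- (ln 2 / tau) * t) :> R.
Proof.
move=> tau0 tk.
have -> : (2 ^+ k)^-1 = expR (- (ln 2 / tau) * (k%:R * tau)) :> R.
  have -> : - (ln 2 / tau) * (k%:R * tau) = - (k%:R * ln 2 :> R).
    by field; rewrite gt_eqF.
  by rewrite expRN expRM_natl lnK // posrE ltr0n.
rewrite ler_expR !mulNr lerN2 ler_wpM2l // divr_ge0 ?ltW //.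
by rewrite ln_gt0 // ltr1n.
Qed.

Lemma decay tau K (tf : X -> R) x : 0 < tau -> 0 < K ->
  (forall y, [/\ 0 <= tf y, tf y <= tau & `|T (tf y) y| <= 2^-1 * `|y|]) ->
  (forall s y, 0 <= s -> s <= tau -> `|T s y| <= K * `|y|) ->
  forall t, 0 <= t -> `|T t x| <= 2 * K * expR (- (ln 2 / tau) * t) * `|x|.
Proof.
move=> tau0 K0 Htf HK.
pose st := fun p : R * X => (p.1 + tf p.2, T (tf p.2) p.2).
pose p := fun k : nat => iter k st (0, x).
pose s := fun k => (p k).1.
pose y := fun k => (p k).2.
have sS k : s k.+1 = s k + tf (y k) by [].
have yS k : y k.+1 = T (tf (y k)) (y k) by [].
have s0 k : 0 <= s k.
  elim: k => [|k IH]; first by rewrite /s /=.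
  by rewrite sS addr_ge0 //; case: (Htf (y k)).
have sk k : s k <= k%:R * tau.
  elim: k => [|k IH]; first by rewrite /s /= mul0r.
  by rewrite sS -natr1 mulrDl mul1r lerD //; case: (Htf (y k)).
have Ty k : T (s k) x = y k.
  elim: k => [|k IH]; first by rewrite /s /y /= T_0.
  by rewrite sS yS addrC T_add ?IH //; case: (Htf (y k)).
have yk k : `|y k| <= (2 ^+ k)^-1 * `|x|.
  elim: k => [|k IH]; first by rewrite /y /= expr0 invr1 mul1r.
  rewrite yS; case: (Htf (y k)) => _ _ h; apply: (le_trans h).
  by rewrite exprS invfM -mulrA ler_wpM2l // invr_ge0 ler0n.
have bnd k t : s k <= t -> t - s k <= tau -> `|T t x| <= K * (2 ^+ k)^-1 * `|x|.
  move=> h1 h2; have -> : t = (t - s k) + s k by rewrite subrK.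
  rewrite T_add ?subr_ge0 // Ty -mulrA.
  by apply: (le_trans (HK _ _ _ h2)); rewrite ?subr_ge0 // ler_wpM2l // ltW.
move=> t t0.
case: (pselect (exists k, t < s k)) => [[k tk]|nk].
  have main : forall k u, 0 <= u -> u < s k ->
      `|T u x| <= 2 * K * expR (- (ln 2 / tau) * u) * `|x|.
    elim => [|k' IH] u u0 uk; first by move: uk; rewrite /s /= ltNge u0.
    case: (ltP u (s k')) => hu; first exact: IH.
    have [h1 h2 _] := Htf (y k').
    move: uk; rewrite sS => uk.
    apply: (le_trans (bnd k' u hu _)); first by lra.
    have hle : u <= k'.+1%:R * tau.
      by apply: (le_trans (ltW uk)); rewrite -sS; exact: sk.
    have E := pow2_exp tau0 hle.
    rewrite exprS invfM in E.
    apply: ler_wpM2r => //; rewrite [2 * K]mulrC -mulrA ler_pM2l //.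
    have E2 : 0 <= 2 ^- k' :> R by rewrite invr_ge0 exprn_ge0.
    lra.
  exact: main k t t0 tk.
have ub : forall k, s k <= t.
  by move=> k; rewrite leNgt; apply/negP => h; apply: nk; exists k.
pose E := range s.
have E0 : E !=set0 by exists (s 0%N), 0%N.
have hs : has_sup E by split => //; exists t => _ [k _ <-]; exact: ub k.
set L := sup E.
have sL k : s k <= L by apply: sup_upper_bound => //; exists k.
have Lt : L <= t by apply: ge_sup => // _ [k _ <-]; exact: ub.
have [_ [k0 _ <-] hk0] := sup_adherent tau0 hs.
have mono : forall k, (k0 <= k)%N -> s k0 <= s k.
  elim => [|k IH]; first by rewrite leqn0 => /eqP ->.
  rewrite leq_eqVlt => /orP [/eqP -> //| ]; rewrite ltnS => /IH h.
  by rewrite sS; apply: (le_trans h); rewrite lerDl; case: (Htf (y k)).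
have bL : forall k, (k0 <= k)%N -> `|T L x| <= K * (2 ^+ k)^-1 * `|x|.
  move=> k kk; apply: bnd; first exact: sL.
  have := mono k kk; have := sL k; rewrite -/L in hk0; lra.
have TL0 : T L x = 0.
  apply/eqP; rewrite -normr_eq0; apply/contraT => nz.
  have pos : 0 < `|T L x| by rewrite lt_def nz normr_ge0.
  pose k := maxn k0 (Num.truncn (K * `|x| / `|T L x|)).
  have := bL k (leq_maxl _ _); rewrite leNgt => /negP h; exfalso; apply: h.
  have h2 : (k.+1%:R : R) <= 2 ^+ k by rewrite -natrX ler_nat ltn_expl.
  have h3 : K * `|x| / `|T L x| < k.+1%:R.
    by apply: (lt_le_trans (truncnS_gt _)); rewrite ler_nat ltnS leq_maxr.
  apply: (le_lt_trans (y := K * `|x| / k.+1%:R)).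
    rewrite mulrAC; apply: ler_wpM2l; first by rewrite mulr_ge0 // ltW.
    by rewrite lef_pV2 ?posrE ?ltr0n ?exprn_gt0.
  rewrite ltr_pdivrMr ?ltr0n //; rewrite ltr_pdivrMr // in h3.
  by rewrite [X in _ < X]mulrC.
have L0 : 0 <= L by apply: (le_trans (s0 0%N)).
rewrite (_ : t = (t - L) + L); last by rewrite subrK.
rewrite T_add ?subr_ge0 // TL0 T_x0 ?subr_ge0 // normr0.
apply: mulr_ge0 => //; apply: mulr_ge0; last exact: expR_ge0.
by apply: mulr_ge0 => //; exact: ltW.
Qed.

Lemma iv_i : UGWATT T -> exp_stable T.
Proof.
move=> H; have h2 : 0 < 2^-1 :> R by rewrite invr_gt0.
have [tau1 [tau1ge Htau]] := H 2^-1 1 h2 ltr01.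
pose tau := tau1 + 1.
have tau0 : 0 < tau by rewrite /tau ltr_pwDr.
have Htau' : forall x, `|x| <= 1 -> exists t, 0 <= t /\ t <= tau /\ `|T t x| <= 2^-1.
  move=> x /Htau [t [t0 [tt h]]]; exists t; split => //; split => //.
  by rewrite /tau; apply: (le_trans tt); rewrite lerDl.
have [tf Htf] := choice (halve Htau').
have Htf' : forall y, [/\ 0 <= tf y, tf y <= tau & `|T (tf y) y| <= 2^-1 * `|y|].
  by move=> y; have [a [b c]] := Htf y; split.
have [K [K0 HK]] := locbound tau.
exists (2 * K), (ln 2 / tau); split; first by rewrite mulr_gt0.
split; first by rewrite divr_gt0 // ln_gt0 // ltr1n.
by move=> t x t0; apply: decay.
Qed.

Lemma lin_K (c : R) : 0 < c -> class_K (fun r => c * r).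
Proof.
move=> c0; split.
- apply: continuous_subspaceT => x; apply: cvgM; [exact: cvg_cst| exact: cvg_id].
- by rewrite mulr0.
- by move=> r r0; rewrite mulr_ge0 // ltW.
- by move=> r s _ rs; rewrite ltr_pM2l.
Qed.

Lemma lin_Kinf (c : R) : 0 < c -> class_Kinf (fun r => c * r).
Proof.
move=> c0; split; first exact: lin_K.
move=> M; exists ((Num.max M 0 + 1) / c); split.
  apply: divr_ge0; last exact: ltW.
  by rewrite addr_ge0 // le_max lexx orbT.
rewrite mulrC divfK ?gt_eqF //.
apply: (le_lt_trans (y := Num.max M 0)); first by rewrite le_max lexx.
by rewrite ltrDl.
Qed.

Lemma beta_cont (M lam : R) : continuous (fun p : R * R => M * expR (- lam * p.2) * p.1).
Proof.
move=> p; apply: cvgM; last exact: cvg_fst.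
apply: cvgM; first exact: cvg_cst.
apply: continuous_comp; last exact: continuous_expR.
apply: cvgM; first exact: cvg_cst.
exact: cvg_snd.
Qed.

Lemma i_ii : exp_stable T -> UGAS T.
Proof.
move=> [M [lam [M0 [lam0 H]]]].
exists (fun r t => M * expR (- lam * t) * r); split; last first.
  by move=> x t t0; apply: H.
split.
  by apply: continuous_subspaceT => p; exact: beta_cont.
  by move=> p q p0 _; apply: mulr_ge0 => //; apply: mulr_ge0; [exact: ltW | exact: expR_ge0].
  by move=> t t0; apply: lin_K; rewrite mulr_gt0 ?expR_gt0.
move=> r r0; split.
  move=> t s _ ts; rewrite ltr_pM2r // ltr_pM2l // ltr_expR !mulNr ltrN2.
  by rewrite ltr_pM2l.
apply/cvgrPdist_le => e e0.
exists ((M * r) / (lam * e)); split; first by rewrite num_real.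
move=> t ht.
have t0 : 0 < t by apply: le_lt_trans ht; rewrite !divr_ge0 ?mulr_ge0 ?ltW.
rewrite sub0r normrN ger0_norm; last first.
  by apply: mulr_ge0; [apply: mulr_ge0; [exact: ltW|exact: expR_ge0]|exact: ltW].
have E : expR (- lam * t) <= (lam * t)^-1.
  rewrite mulNr expRN lef_pV2 ?posrE ?expR_gt0 ?mulr_gt0 //.
  by apply: le_trans (expR_ge1Dx _); rewrite lerDr.
apply: (le_trans (y := M * r * (lam * t)^-1)).
  rewrite mulrAC; apply: ler_wpM2l => //; by rewrite mulr_ge0 ?ltW.
rewrite ler_pdivrMr ?mulr_gt0 //.
move: ht; rewrite ltr_pdivrMr ?mulr_gt0 // => ht.
have -> : e * (lam * t) = t * (lam * e) by ring.
exact: ltW.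
Qed.

Lemma ii_iii : UGAS T -> UGATT T.
Proof.
move=> [beta [[_ _ bK bL] Hb]] r eps r0 e0.
have [_ lim] := bL r r0.
move: lim => /cvgr_dist_le/(_ eps e0) [M [_ HM]].
exists (Num.max 0 (M + 1)); split; first by rewrite le_max lexx.
move=> x t xr tt.
have t0 : 0 <= t by apply: le_trans tt; rewrite le_max lexx.
apply: (le_trans (Hb x t t0)).
have [_ _ _ inc] := bK t t0.
apply: (le_trans (y := beta r t)).
  move: xr; rewrite le_eqVlt => /orP [/eqP -> //|xr].
  by apply: ltW; apply: inc.
have := HM t; rewrite sub0r normrN => h.
apply: le_trans (ler_norm _) (h _).
apply: lt_le_trans tt; apply: (lt_le_trans (y := M + 1)); last by rewrite le_max lexx orbT.
by rewrite ltrDl.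
Qed.

Lemma iii_iv : UGATT T -> UGWATT T.
Proof.
move=> H eps r e0 r0; have [tau [tau0 Ht]] := H r eps r0 e0.
exists tau; split => // x xr; exists tau; split => //; split => //.
exact: Ht.
Qed.

Lemma einf_le (f : R -> R) c : (\forall h \near 0^'+, f h <= c) ->
  (limf_einf (fun h => (f h)%:E) 0^'+ <= c%:E)%E.
Proof.
move=> Hc; rewrite limf_einfE; apply: ge_ereal_sup => _ [V FV <-].
have [y [Vy Wy]] := filter_ex (filterI FV Hc).
by apply: ge_ereal_inf; exists (f y)%:E => //; exists y.
Qed.

Lemma einf_lt (f : R -> R) c c' : (limf_einf (fun h => (f h)%:E) 0^'+ <= c%:E)%E ->
  c < c' -> forall d, 0 < d -> exists h, [/\ 0 < h, h < d & f h < c'].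
Proof.
move=> Hl cc d d0; apply: contrapT => Hn.
pose W := (fun x : R => 0 < x) `&` (fun x => x < d).
have FW : 0^'+ W by apply: filterI; [exact: nbhs_right_gt | exact: nbhs_right_lt].
have : (c'%:E <= limf_einf (fun h => (f h)%:E) 0^'+)%E.
  rewrite limf_einfE; apply: le_ereal_sup_tmp.
  exists (ereal_inf ((fun h => (f h)%:E) @` W)); first by exists W.
  apply: le_ereal_inf_tmp => _ [h [h0 hd] <-]; rewrite lee_fin.
  by rewrite leNgt; apply/negP => hf; apply: Hn; exists h.
move=> h; have := le_trans h Hl; rewrite lee_fin => h'.
by move: cc; rewrite ltNge h'.
Qed.

Definition Vset (lam : R) x := [set y : R | exists2 t, 0 <= t & y = expR (lam * t) * `|T t x|].
Definition VL lam x := sup (Vset lam x).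

Lemma Vset_ub M lam : (forall t x, 0 <= t -> `|T t x| <= M * expR (- lam * t) * `|x|) ->
  forall x, ubound (Vset lam x) (M * `|x|).
Proof.
move=> H x _ [t t0 ->].
apply: (le_trans (ler_wpM2l (expR_ge0 _) (H t x t0))).
have -> : expR (lam * t) * (M * expR (- lam * t) * `|x|) =
  M * `|x| * (expR (lam * t) * expR (- lam * t)) by ring.
by rewrite -expRD mulNr addrN expR0 mulr1.
Qed.

Lemma Vset_sup M lam : (forall t x, 0 <= t -> `|T t x| <= M * expR (- lam * t) * `|x|) ->
  forall x, has_sup (Vset lam x).
Proof.
move=> H x; split; last by exists (M * `|x|); exact: Vset_ub.
by exists `|x|, 0 => //; rewrite mulr0 expR0 mul1r T_0.
Qed.

Lemma V_ge M lam : (forall t x, 0 <= t -> `|T t x| <= M * expR (- lam * t) * `|x|) ->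
  forall x, `|x| <= VL lam x.
Proof.
move=> H x; apply: sup_upper_bound; first exact: Vset_sup H x.
by exists 0 => //; rewrite mulr0 expR0 mul1r T_0.
Qed.

Lemma V_le M lam : (forall t x, 0 <= t -> `|T t x| <= M * expR (- lam * t) * `|x|) ->
  forall x, VL lam x <= M * `|x|.
Proof.
move=> H x; apply: ge_sup; last exact: Vset_ub.
by exists `|x|, 0 => //; rewrite mulr0 expR0 mul1r T_0.
Qed.

Lemma V_lip M lam : (forall t x, 0 <= t -> `|T t x| <= M * expR (- lam * t) * `|x|) ->
  forall x y, VL lam x <= VL lam y + M * `|x - y|.
Proof.
move=> H x y; apply: ge_sup.
  by exists `|x|, 0 => //; rewrite mulr0 expR0 mul1r T_0.
move=> _ [t t0 ->].
rewrite [in T t x](_ : x = y + (x - y)); last by rewrite addrC subrK.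
rewrite T_D //.
apply: (le_trans (ler_wpM2l (expR_ge0 _) (ler_normD _ _))).
rewrite mulrDr; apply: lerD.
  by apply: sup_upper_bound; [exact: Vset_sup H y | exists t].
by apply: Vset_ub H _ _ _; exists t.
Qed.

Lemma V_dec M lam : (forall t x, 0 <= t -> `|T t x| <= M * expR (- lam * t) * `|x|) ->
  forall x h, 0 <= h -> VL lam (T h x) <= expR (- lam * h) * VL lam x.
Proof.
move=> H x h h0; apply: ge_sup.
  by exists `|T h x|, 0 => //; rewrite mulr0 expR0 mul1r T_0.
move=> _ [t t0 ->]; rewrite -T_add //.
have -> : expR (lam * t) * `|T (t + h) x| =
    expR (- lam * h) * (expR (lam * (t + h)) * `|T (t + h) x|).
  by rewrite mulrA -expRD; congr (expR _ * _); ring.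
apply: ler_wpM2l; first exact: expR_ge0.
by apply: sup_upper_bound; [exact: Vset_sup H x | exists (t + h) => //; rewrite addr_ge0].
Qed.

Lemma dini_step (W v nx a u h lam : R) : 0 < h -> 0 < u -> u < 1 -> u = lam * h ->
  0 <= nx -> nx <= v -> W <= a * v -> a * (1 + u) <= 1 ->
  (W - v) / h <= - (lam / 2 * nx).
Proof.
move=> h0 u0 u1 ul nx0 nxv Wa au.
have ha : a <= 1 - u / 2 by nra.
rewrite ler_pdivrMr //.
have : a * v <= (1 - u / 2) * v by apply: ler_wpM2r => //; apply: le_trans nxv.
rewrite ul in u0 u1 *.
nra.
Qed.

Lemma i_v : exp_stable T -> exists V, noncoercive_Lyapunov T V.
Proof.
move=> [M [lam [M0 [lam0 H]]]].
exists (VL lam); split.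
  move=> x; apply/cvgrPdist_lt => e e0.
  apply/nbhs_normP; exists (e / M); first by rewrite /= divr_gt0.
  move=> y /= hy.
  have h1 := V_lip H x y; have h2 := V_lip H y x.
  rewrite distrC in h2.
  have : `|VL lam x - VL lam y| <= M * `|x - y|.
    by rewrite ler_norml; apply/andP; split; lra.
  move=> /le_lt_trans; apply.
  by rewrite -ltr_pdivlMl // mulrC.
  apply/eqP; rewrite eq_le; apply/andP; split.
    by apply: le_trans (V_le H 0) _; rewrite normr0 mulr0.
  by have := V_ge H 0; rewrite normr0.
  by move=> x; apply: le_trans (V_ge H x).
exists (fun r => M * r), (fun r => lam / 2 * r); split; first exact: lin_Kinf.
split; first by apply: lin_K; rewrite divr_gt0.
move=> x x0; split.
    by apply: lt_le_trans (V_ge H x); rewrite normr_gt0.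
  exact: V_le.
apply: einf_le.
have F1 : 0^'+ ((fun h : R => 0 < h) `&` (fun h => h < lam^-1)).
  by apply: filterI; [exact: nbhs_right_gt | apply: nbhs_right_lt; rewrite invr_gt0].
apply: filterS F1 => h [h0 hl'].
have e1 : lam * lam^-1 = 1 by rewrite mulfV ?gt_eqF.
apply: (dini_step (a := expR (- lam * h)) (u := lam * h)) => //.
  by rewrite mulr_gt0.
  by nra.
  exact: V_ge H x.
  by apply: (V_dec H) => //; exact: ltW.
have := expR_ge1Dx (lam * h); rewrite addrC => E.
apply: le_trans (ler_wpM2l (expR_ge0 _) E) _.
by rewrite -expRD mulNr addNr expR0.
Qed.

Lemma left_cont x s tau : 0 <= s -> s <= tau -> forall rho, 0 < rho ->
  exists2 eta, 0 < eta & forall t, s - eta < t -> t <= s -> 0 <= t ->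
    `|T s x - T t x| < rho.
Proof.
move=> s0 st rho rho0.
have [K [K0 HK]] := locbound tau.
have /cvgr_dist_lt/(_ (rho / K) (divr_gt0 rho0 K0))/near_right [d d0 Hd] := @T_strong x.
exists d => // t h1 h2 t0.
have u0 : 0 <= s - t by rewrite subr_ge0.
have -> : T s x = T t (T (s - t) x) by rewrite -T_add // addrC subrK.
rewrite -T_B //.
apply: (le_lt_trans (HK _ _ t0 (le_trans h2 st))).
move: u0; rewrite le_eqVlt => /orP [/eqP <-|u0].
  by rewrite T_0 subrr normr0 mulr0.
have hd : s - t < d by lra.
have := Hd _ u0 hd; rewrite distrC => h.
apply: (lt_le_trans (y := K * (rho / K))); first by rewrite ltr_pM2l.
by rewrite mulrC divfK ?gt_eqF.
Qed.

Lemma lyap_dec (V : X -> R) (a tau : R) x : continuous V -> 0 < a -> 0 <= tau ->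
  (forall t, 0 <= t -> t < tau -> forall d, 0 < d -> exists h,
     [/\ 0 < h, h < d & (V (T h (T t x)) - V (T t x)) / h < - a]) ->
  V (T tau x) + a * tau <= V x.
Proof.
move=> Vc a0 tau0 Hd.
pose g t := V (T t x) + a * t.
pose S := [set t | [/\ 0 <= t, t <= tau & g t <= g 0]].
have S0 : S 0 by split.
have hS : has_sup S by split; [exists 0 | exists tau => t [_ ? _]].
set s := sup S.
have s0 : 0 <= s by apply: sup_upper_bound.
have stau : s <= tau by apply: ge_sup; [exists 0 | move=> t [_ ? _]].
have gs : g s <= g 0.
  rewrite leNgt; apply/negP => hlt.
  pose dl := g s - g 0.
  have dl0 : 0 < dl by rewrite subr_gt0.
  have spos : 0 < s.
    rewrite lt_def s0 andbT; apply/eqP => es; by move: hlt; rewrite es ltxx.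
  have dl2 : 0 < dl / 2 by rewrite divr_gt0.
  have /cvgr_dist_lt/(_ (dl / 2) dl2) := Vc (T s x).
  move=> /nbhs_normP [rho /= rho0 Hrho].
  have [eta1 eta10 Heta1] := left_cont x s0 stau rho0.
  pose eta := Num.min eta1 (dl / (2 * a)).
  have eta0 : 0 < eta by rewrite lt_min eta10 divr_gt0 // mulr_gt0.
  have [t [t0 tt gt] ht] := sup_adherent eta0 hS.
  move: ht; rewrite -/s => ht.
  have tS : t <= s by apply: sup_upper_bound.
  have e1 : s - eta1 < t by apply: le_lt_trans ht; rewrite lerD2l lerN2 ge_min lexx.
  have hv := Hrho _ (Heta1 _ e1 tS t0).
  have e2 : a * (s - t) <= dl / 2.
    have : s - t <= dl / (2 * a).
      have : s - t < eta by lra.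
      by move=> /ltW /le_trans; apply; rewrite ge_min lexx orbT.
    move=> /(ler_wpM2l (ltW a0)) h.
    have E : a * (dl / (2 * a)) = dl / 2 by field; rewrite gt_eqF.
    by rewrite -E.
  move: gt hv; rewrite /g /dl => gt hv.
  rewrite ltr_norml in hv; case/andP: hv => hv1 hv2.
  move: e2; rewrite /dl /g => e2.
  move: hv1 hv2 e2 gt; rewrite /g => hv1 hv2 e2 gt; lra.
have ss : s = tau.
  apply/eqP; rewrite eq_le stau /= leNgt; apply/negP => lt.
  have d0 : 0 < tau - s by rewrite subr_gt0.
  have [h [h0 hd hq]] := Hd s s0 lt (tau - s) d0.
  rewrite -T_add in hq; [|exact: ltW|exact: s0].
  rewrite ltr_pdivrMr // in hq.
  have : S (h + s).
    split; first by rewrite addr_ge0 // ltW.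
      by lra.
    move: gs; rewrite /g => gs'; lra.
  move/(sup_upper_bound hS); rewrite -/s => hs.
  lra.
have := gs; rewrite /g ss T_0 mulr0 addr0 //.
Qed.

Lemma v_iv : (exists V, noncoercive_Lyapunov T V) -> UGWATT T.
Proof.
move=> [V [Vc V0 Vnn [psi2 [alpha [[[_ p0 pnn pinc] _] [[_ a0' ann ainc] HV]]]]]].
move=> eps r e0 r0.
pose a := alpha eps.
have a0 : 0 < a by have := ainc 0 eps (lexx 0) e0; rewrite a0'.
pose P := psi2 r.
have P0 : 0 <= P := pnn r (ltW r0).
pose tau := (P + 1) / a.
have tau0 : 0 <= tau by apply: divr_ge0; [rewrite addr_ge0 | exact: ltW].
exists tau; split => // x xr.
apply: contrapT => Hn.
have Hgt : forall t, 0 <= t -> t <= tau -> eps < `|T t x|.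
  move=> t t0 tt; rewrite ltNge; apply/negP => h; apply: Hn; exists t; split => //.
have x0 : x != 0.
  apply/eqP => ex; have h := Hgt 0 (lexx 0) tau0.
  rewrite ex T_0 normr0 in h; lra.
have key : V (T tau x) + a * tau <= V x.
  apply: lyap_dec => // t t0 tt d d0.
  have ht := Hgt t t0 (ltW tt).
  have hT : T t x != 0.
    by apply/eqP => e; rewrite e normr0 in ht; lra.
  have [_ _ hl] := HV _ hT.
  apply: (einf_lt hl) => //.
  by rewrite ltrN2; apply: ainc => //; exact: ltW.
have Vx : V x <= P.
  have [_ hle _] := HV x x0; apply: (le_trans hle).
  move: xr; rewrite le_eqVlt => /orP [/eqP -> //|xr].
  by apply: ltW; apply: pinc.
have E : a * tau = P + 1 by rewrite /tau; field; rewrite gt_eqF.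
have := Vnn (T tau x).
lra.
Qed.

End S.
Unset Implicit Arguments.
Theorem proposition32 (R : realType) (X : completeNormedModType R)
  (T : R -> X -> X) :
  C0_semigroup T ->
  [<-> exp_stable T; UGAS T; UGATT T; UGWATT T;
       exists V : X -> R, noncoercive_Lyapunov T V].
Proof.
move=> HT; tfae.
- exact: i_ii.
- exact: ii_iii.
- exact: iii_iv.
- by move=> H; apply: i_v => //; apply: iv_i.
- by move=> H; apply: iv_i => //; apply: v_iv.
Qed.
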